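(* (1) Let $(Y^*,Y,X)$ be random variables with $Y^*,Y\in\{0,1\}$, $X=(\tilde X,Z)\in\mathcal X$, $\tilde X\in\tilde{\mathcal X}$, $Z$ taking values in a finite set $\mathcal Z$. Let $p(x)=\Pr(Y=1\mid X=x)$, $p^*(x)=\Pr(Y^*=1\mid X=x)$, $\underline p_z(\tilde x)=\inf_{z\in\mathcal Z}p(\tilde x,z)$, $\bar p_z(\tilde x)=\sup_{z\in\mathcal Z}p(\tilde x,z)$. Assume: for all $x=(\tilde x,z)$ and $y\in\{0,1\}$, $\Pr(Y=1-y\mid Y^*=y,X=x)=\Pr(Y=1-y\mid Y^*=y,\tilde X=\tilde x)$; for all $\tilde x$, $\Pr(Y=0\mid Y^*=1,\tilde x)+\Pr(Y=1\mid Y^*=0,\tilde x)\le1$; for all $\tilde x$, $\bar p_z(\tilde x)>0$ and $\underline p_z(\tilde x)<1$; and for all $\tilde x$, $\Pr(Y=1\mid Y^*=0,\tilde x)\le\Pr(Y=0\mid Y^*=1,\tilde x)$. Then for every $x=(\tilde x,z)\in\mathcal X$, $$p^*(x)\in\left[\frac{p(x)-\min\{\underline p_z(\tilde x),1-\bar p_z(\tilde x)\}}{1-\min\{\underline p_z(\tilde x),1-\bar p_z(\tilde x)\}},\ \frac{p(x)}{\bar p_z(\tilde x)}\right].$$ (2) Let $(Y^*,Y,X,W)$ be random variables with $Y^*,Y\in\{0,1\}$, $X\in\mathcal X$, $W$ taking values in a finite set of reals $\mathcal W$. Let $p^*(x)=\Pr(Y^*=1\mid X=x)$, $p_W(x,w)=\Pr(Y=1\mid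 X=x,W=w)$, $\underline p_w(x,w)=\inf_{\tilde w\le w}p_W(x,\tilde w)$, $\bar p_w(x,w)=\sup_{\tilde w\le w}p_W(x,\tilde w)$ (over $\tilde w\in\mathcal W$). Assume: $\Pr(Y^*=1\mid x,w)=p^*(x)$ for all $x,w$; for all $x$, $y\in\{0,1\}$ and $w_1>w_2$ in $\mathcal W$, $\Pr(Y=1-y\mid Y^*=y,x,w_1)\le\Pr(Y=1-y\mid Y^*=y,x,w_2)$; for all $x,w$, $\Pr(Y=1\mid Y^*=0,x,w)+\Pr(Y=0\mid Y^*=1,x,w)\le1$ and $0<p_W(x,w)<1$; and for all $(x,w)$, $\Pr(Y=1\mid Y^*=0,x,w)\le\Pr(Y=0\mid Y^*=1,x,w)$. Then for every $x\in\mathcal X$, $$p^*(x)\in\left[\sup_{w\in\mathcal W}\left\{\frac{p_W(x,w)-\min\{\underline p_w(x,w),1-\bar p_w(x,w)\}}{1-\min\{\underline p_w(x,w),1-\bar p_w(x,w)\}}\right\},\ \inf_{w\in\mathcal W}\left\{\frac{p_W(x,w)}{\bar p_w(x,w)}\right\}\right].$$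
   Context: $Y^*$ is the true (unobserved) binary outcome and $Y$ the observed, possibly misreported outcome; conditioning on $\tilde x$ (resp. $x,w$) means conditioning on $\tilde X=\tilde x$ (resp. $X=x,W=w$). *)

(* Defs.v *)
From HB Require Import structures.
From mathcomp Require Import all_boot all_order all_algebra.
Set Implicit Arguments. Unset Strict Implicit. Unset Printing Implicit Defensive.
Import Order.TTheory GRing.Theory Num.Theory.
Local Open Scope ring_scope.

(* A conditional law of (Y*, Y) given a conditioning value c is described by
   pst c  = Pr(Y* = 1 | c)
   a y c  = Pr(Y = 1 - y | Y* = y, c)     (misreporting probabilities)
   so that, by the law of total probability,
   Pr(Y = 1 | c) = Pr(Y*=0|c) Pr(Y=1|Y*=0,c) + Pr(Y*=1|c) Pr(Y=1|Y*=1,c). *)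
Definition probY1 (R : realFieldType) (C : Type)
  (pst : C -> R) (a : bool -> C -> R) (c : C) : R :=
  (1 - pst c) * a false c + pst c * (1 - a true c).

(* Pr(Y = 1 - y | Y* = y, Xt = xt) = sum_z Pr(Z=z | Y*=y, Xt=xt) Pr(Y=1-y | Y*=y, Xt=xt, Z=z),
   where piZ xt y z = Pr(Z = z | Y* = y, Xt = xt). *)
Definition abarXt (R : realFieldType) (Xt : Type) (Z : finType)
  (piZ : Xt -> bool -> Z -> R) (a : bool -> Xt * Z -> R) (y : bool) (xt : Xt) : R :=
  \sum_(z : Z) piZ xt y z * a y (xt, z).

(* inf / sup over the finite nonempty set Z (z0 only seeds the iteration). *)
Definition plowZ (R : realFieldType) (Xt : Type) (Z : finType)
  (p : Xt * Z -> R) (xt : Xt) (z0 : Z) : R :=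
  \big[Num.min/p (xt, z0)]_(z : Z) p (xt, z).
Definition pbarZ (R : realFieldType) (Xt : Type) (Z : finType)
  (p : Xt * Z -> R) (xt : Xt) (z0 : Z) : R :=
  \big[Num.max/p (xt, z0)]_(z : Z) p (xt, z).

(* p*(x) = Pr(Y*=1 | X=x) = sum_w Pr(W=w|X=x) Pr(Y*=1|X=x,W=w),  omega x w = Pr(W=w|X=x). *)
Definition pstarXW (R : realFieldType) (X : Type) (W : finType)
  (omega : X -> W -> R) (ps : X -> W -> R) (x : X) : R :=
  \sum_(w : W) omega x w * ps x w.

(* inf / sup of pW x wt over wt in W with wv wt <= wv w (nonempty: contains w). *)
Definition plowW (R : realFieldType) (X : Type) (W : finType) (wv : W -> R)
  (pW : X -> W -> R) (x : X) (w : W) : R :=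
  \big[Num.min/pW x w]_(wt : W | wv wt <= wv w) pW x wt.
Definition pbarW (R : realFieldType) (X : Type) (W : finType) (wv : W -> R)
  (pW : X -> W -> R) (x : X) (w : W) : R :=
  \big[Num.max/pW x w]_(wt : W | wv wt <= wv w) pW x wt.

(* max / min over the finite nonempty set W (w0 only seeds the iteration). *)
Definition supW (R : realFieldType) (W : finType) (w0 : W) (F : W -> R) : R :=
  \big[Num.max/F w0]_(w : W) F w.
Definition infW (R : realFieldType) (W : finType) (w0 : W) (F : W -> R) : R :=
  \big[Num.min/F w0]_(w : W) F w.

(* Main.v *)
Require Import Defs.
From HB Require Import structures.
From mathcomp Require Import all_boot all_order all_algebra.
From mathcomp Require Import lra.
Import Order.TTheory GRing.Theory Num.Theory.
Local Open Scope ring_scope.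

Section Helpers.
Variable R : realFieldType.

Lemma bmin_ge (I : finType) (P : pred I) (F : I -> R) s c :
  c <= s -> (forall i, P i -> c <= F i) -> c <= \big[Num.min/s]_(i | P i) F i.
Proof.
move=> hs hF; apply: (big_ind (fun v => c <= v)) => //.
by move=> u v hu hv; rewrite le_min hu hv.
Qed.

Lemma bmax_le (I : finType) (P : pred I) (F : I -> R) s c :
  s <= c -> (forall i, P i -> F i <= c) -> \big[Num.max/s]_(i | P i) F i <= c.
Proof.
move=> hs hF; apply: (big_ind (fun v => v <= c)) => //.
by move=> u v hu hv; rewrite ge_max hu hv.
Qed.

Lemma bmax_ge (I : finType) (P : pred I) (F : I -> R) s j :
  P j -> F j <= \big[Num.max/s]_(i | P i) F i.
Proof. by move=> hj; rewrite (bigD1 j) //= le_max lexx. Qed.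

Lemma bmin_le (I : finType) (P : pred I) (F : I -> R) s j :
  P j -> \big[Num.min/s]_(i | P i) F i <= F j.
Proof. by move=> hj; rewrite (bigD1 j) //= ge_min lexx. Qed.

Lemma core (P a0 a1 pbar m : R) :
  0 <= P <= 1 -> 0 <= a0 -> 0 <= a1 -> a0 <= a1 -> a0 + a1 <= 1 ->
  pbar <= 1 - a1 -> 0 < pbar -> a0 <= m -> m < 1 ->
  ((1 - P) * a0 + P * (1 - a1) - m) / (1 - m) <= P <=
  ((1 - P) * a0 + P * (1 - a1)) / pbar.
Proof.
move=> /andP[P0 P1] a00 a10 a01 as1 pb1 pb0 am m1.
apply/andP; split.
  rewrite ler_pdivrMr; last by rewrite subr_gt0.
  have h1 : 0 <= (1 - P) * (m - a0) by apply: mulr_ge0; lra.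
  have h2 : 0 <= P * a1 by apply: mulr_ge0.
  nra.
rewrite ler_pdivlMr //.
have h1 : 0 <= P * (1 - a1 - pbar) by apply: mulr_ge0; lra.
have h2 : 0 <= (1 - P) * a0 by apply: mulr_ge0; lra.
nra.
Qed.

End Helpers.

Theorem proposition5 (R : realFieldType) :
  (* ----- Part (1) ----- *)
  (forall (Xt : Type) (Z : finType)
     (pst : Xt * Z -> R)              (* Pr(Y*=1 | X=x) *)
     (a : bool -> Xt * Z -> R)        (* Pr(Y=1-y | Y*=y, X=x) *)
     (piZ : Xt -> bool -> Z -> R),    (* Pr(Z=z | Y*=y, Xt=xt) *)
     (forall x, 0 <= pst x <= 1) ->
     (forall y x, 0 <= a y x <= 1) ->
     (forall xt y z, 0 <= piZ xt y z) ->
     (forall xt y, \sum_(z : Z) piZ xt y z = 1) ->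
     (forall xt z y, a y (xt, z) = abarXt piZ a y xt) ->
     (forall xt, abarXt piZ a true xt + abarXt piZ a false xt <= 1) ->
     (forall xt z0, 0 < pbarZ (probY1 pst a) xt z0 /\ plowZ (probY1 pst a) xt z0 < 1) ->
     (forall xt, abarXt piZ a false xt <= abarXt piZ a true xt) ->
     forall (xt : Xt) (z : Z),
       let p := probY1 pst a in
       let m := Num.min (plowZ p xt z) (1 - pbarZ p xt z) in
       (p (xt, z) - m) / (1 - m) <= pst (xt, z) <= p (xt, z) / pbarZ p xt z)
  /\
  (* ----- Part (2) ----- *)
  (forall (X : Type) (W : finType) (wv : W -> R)
     (ps : X -> W -> R)               (* Pr(Y*=1 | X=x, W=w) *)
     (a : bool -> X -> W -> R)        (* Pr(Y=1-y | Y*=y, X=x, W=w) *)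
     (omega : X -> W -> R),           (* Pr(W=w | X=x) *)
     injective wv ->
     (forall x w, 0 <= ps x w <= 1) ->
     (forall y x w, 0 <= a y x w <= 1) ->
     (forall x w, 0 <= omega x w) ->
     (forall x, \sum_(w : W) omega x w = 1) ->
     (forall x w, ps x w = pstarXW omega ps x) ->
     (forall x y w1 w2, wv w2 < wv w1 -> a y x w1 <= a y x w2) ->
     (forall x w, a false x w + a true x w <= 1) ->
     (forall x w, 0 < probY1 (fun xw : X * W => ps xw.1 xw.2)
                             (fun y xw => a y xw.1 xw.2) (x, w) < 1) ->
     (forall x w, a false x w <= a true x w) ->
     forall (x : X) (w0 : W),
       let pW := fun x w => probY1 (fun xw : X * W => ps xw.1 xw.2)
                                   (fun y xw => a y xw.1 xw.2) (x, w) in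
       let m := fun w => Num.min (plowW wv pW x w) (1 - pbarW wv pW x w) in
       supW w0 (fun w => (pW x w - m w) / (1 - m w)) <= pstarXW omega ps x
       <= infW w0 (fun w => pW x w / pbarW wv pW x w)).
Proof.
split.
- move=> Xt Z pst a piZ Hpst Ha Hpi Hsum Habar Hs1 Hpos Hmono xt z.
  pose p := probY1 pst a.
  pose m := Num.min (plowZ p xt z) (1 - pbarZ p xt z).
  suff : (p (xt, z) - m) / (1 - m) <= pst (xt, z) <= p (xt, z) / pbarZ p xt z by [].
  set a0 := abarXt piZ a false xt; set a1 := abarXt piZ a true xt.
  have hp : forall z', p (xt, z') = (1 - pst (xt, z')) * a0 + pst (xt, z') * (1 - a1).
    by move=> z'; rewrite /p /probY1 !Habar.
  have ha0 : 0 <= a0 <= 1 by rewrite /a0 -(Habar xt z); exact: Ha.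
  have ha1 : 0 <= a1 <= 1 by rewrite /a1 -(Habar xt z); exact: Ha.
  have hs1 : a1 + a0 <= 1 := Hs1 xt.
  have hmo : a0 <= a1 := Hmono xt.
  have hlo : forall z', a0 <= p (xt, z').
    move=> z'; rewrite hp; have := Hpst (xt, z').
    set q := pst _ => /andP[q0 q1].
    have : 0 <= q * (1 - a0 - a1) by apply: mulr_ge0; lra.
    case/andP: ha0 => ? ?; case/andP: ha1 => ? ?; nra.
  have hhi : forall z', p (xt, z') <= 1 - a1.
    move=> z'; rewrite hp; have := Hpst (xt, z').
    set q := pst _ => /andP[q0 q1].
    have : 0 <= (1 - q) * (1 - a0 - a1) by apply: mulr_ge0; lra.
    case/andP: ha0 => ? ?; case/andP: ha1 => ? ?; nra.
  have [pb0 pl1] := Hpos xt z.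
  have pbhi : pbarZ p xt z <= 1 - a1 by apply: bmax_le.
  have pllo : a0 <= plowZ p xt z by apply: bmin_ge.
  have am : a0 <= m by rewrite /m le_min pllo /=; lra.
  have m1 : m < 1 by rewrite /m gt_min pl1.
  rewrite hp.
  case/andP: ha0 => ? ?; case/andP: ha1 => ? ?.
  by apply: core => //; (exact: Hpst || lra).
- move=> X W wv ps a omega Hinj Hps Ha Hom Hsum Hpsc Hmon Hs1 Hpos Hle x w0.
  pose pW := fun x w => probY1 (fun xw : X * W => ps xw.1 xw.2)
                                   (fun y xw => a y xw.1 xw.2) (x, w).
  pose m := fun w => Num.min (plowW wv pW x w) (1 - pbarW wv pW x w).
  suff : supW w0 (fun w => (pW x w - m w) / (1 - m w)) <= pstarXW omega ps x
       <= infW w0 (fun w => pW x w / pbarW wv pW x w) by [].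
  set P := pstarXW omega ps x.
  have hp : forall w, pW x w = (1 - P) * a false x w + P * (1 - a true x w).
    by move=> w; rewrite /pW /probY1 /= Hpsc.
  have HP : 0 <= P <= 1 by rewrite /P -(Hpsc x w0); exact: Hps.
  have key : forall w, (pW x w - m w) / (1 - m w) <= P <= pW x w / pbarW wv pW x w.
    move=> w.
    have hmw : forall y wt, wv wt <= wv w -> a y x w <= a y x wt.
      move=> y wt; rewrite le_eqVlt => /orP[/eqP/Hinj -> //|lt].
      exact: Hmon.
    have ha0 : 0 <= a false x w <= 1 by exact: Ha.
    have ha1 : 0 <= a true x w <= 1 by exact: Ha.
    have hlo : forall wt, wv wt <= wv w -> a false x w <= pW x wt.
      move=> wt hwt; have := hmw false wt hwt; rewrite hp.
      have := Ha false x wt; have := Ha true x wt; have := Hs1 x wt.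
      move: HP; set q := P => /andP[q0 q1] s /andP[? ?] /andP[? ?] h.
      have : 0 <= q * (1 - a false x wt - a true x wt) by apply: mulr_ge0; lra.
      nra.
    have hhi : forall wt, wv wt <= wv w -> pW x wt <= 1 - a true x w.
      move=> wt hwt; have := hmw true wt hwt; rewrite hp.
      have := Ha false x wt; have := Ha true x wt; have := Hs1 x wt.
      move: HP; set q := P => /andP[q0 q1] s /andP[? ?] /andP[? ?] h.
      have : 0 <= (1 - q) * (1 - a false x wt - a true x wt) by apply: mulr_ge0; lra.
      nra.
    have pbhi : pbarW wv pW x w <= 1 - a true x w.
      apply: bmax_le; first exact: (hhi w (lexx _)).
      exact: hhi.
    have pbge : pW x w <= pbarW wv pW x w by apply: bmax_ge; rewrite /= lexx.
    have plle : plowW wv pW x w <= pW x w by apply: bmin_le; rewrite /= lexx.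
    have pllo : a false x w <= plowW wv pW x w.
      apply: bmin_ge; first exact: (hlo w (lexx _)).
      exact: hlo.
    have /andP[pw0 pw1] := Hpos x w.
    have am : a false x w <= m w.
      rewrite /m le_min pllo /=; have := Hle x w; case/andP: ha1 => ? ?; lra.
    have m1 : m w < 1.
      rewrite /m gt_min; apply/orP; left; exact: le_lt_trans plle pw1.
    rewrite hp; case/andP: ha0 => ? ?; case/andP: ha1 => ? ?.
    have : 0 < pbarW wv pW x w by exact: lt_le_trans pw0 pbge.
    have := Hs1 x w; have := Hle x w.
    by move=> ? ? ?; apply: core => //; lra.
  apply/andP; split.
    rewrite /supW; apply: (big_ind (fun v => v <= P)).
    + by case/andP: (key w0).
    + by move=> u v hu hv; rewrite ge_max hu hv.
    + by move=> w _; case/andP: (key w).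
  rewrite /infW; apply: (big_ind (fun v => P <= v)).
  + by case/andP: (key w0).
  + by move=> u v hu hv; rewrite le_min hu hv.
  + by move=> w _; case/andP: (key w).
Qed.
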